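(* Let $R$ be a commutative ring. The following are equivalent: (1) every finitely presented $R$-module is $w$-FP-projective; (2) every FP-projective $R$-module is $w$-FP-projective; (3) $R$ is a $DW$-ring.
   Context: All rings are commutative with identity. A $GV$-ideal of $R$ is a finitely generated ideal $J$ such that the natural map $R\to\mathrm{Hom}_R(J,R)$ is an isomorphism; $GV(R)$ is the set of $GV$-ideals. For an $R$-module $M$, $\mathrm{tor}_{GV}(M)=\{x\in M: Jx=0\text{ for some }J\in GV(R)\}$; $M$ is $GV$-torsion if $\mathrm{tor}_{GV}(M)=M$ and $GV$-torsion-free if $\mathrm{tor}_{GV}(M)=0$. A $GV$-torsion-free module $M$ is a $w$-module if $\mathrm{Ext}^1_R(R/J,M)=0$ for all $J\in GV(R)$; an ideal of $R$ is a $w$-ideal if it is a $w$-module. $R$ is a $DW$-ring if every ideal of $R$ is a $w$-ideal. An $R$-module $A$ is absolutely $w$-pure if $\mathrm{Ext}^1_R(N,A)$ is $GV$-torsion for every finitely presented $R$-module $N$; $A$ is absolutely pure (FP-injective) if $\mathrm{Ext}^1_R(N,A)=0$ for every finitely presented $N$. An $R$-module $M$ is $w$-FP-projective if $\mathrm{Ext}^1_R(M,A)=0$ for every absolutely $w$-pure $R$-module $A$, and FP-projective if $\mathrm{Ext}^1_R(M,A)=0$ for every absolutely pure $R$-module $A$. *)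

(* Defs.v *)
From HB Require Import structures.
From mathcomp Require Import all_boot all_algebra.
Set Implicit Arguments. Unset Strict Implicit. Unset Printing Implicit Defensive.
Import GRing.Theory.
Local Open Scope ring_scope.

Section GVTheory.
Variable R : comPzRingType.

Definition lin (M N : lmodType R) (f : M -> N) : Prop :=
  forall (a : R) (x y : M), f (a *: x + y) = a *: f x + f y.

Definition ses (A E N : lmodType R) (i : A -> E) (p : E -> N) : Prop :=
  [/\ lin i, lin p, injective i, (forall y, exists x, p x = y) &
      (forall x, p x = 0 <-> exists a, i a = x)].

(* Ext^1_R(N, A) = 0 (Yoneda): every extension of N by A splits *)
Definition Ext1_zero (N A : lmodType R) : Prop :=
  forall (E : lmodType R) (i : A -> E) (p : E -> N), ses i p ->
    exists s : N -> E, lin s /\ forall y, p (s y) = y.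

Definition ideal_gen (xs : seq R) : R -> Prop :=
  fun r => exists cs : seq R, size cs = size xs /\
             r = \sum_(i < size xs) cs`_i * xs`_i.

Definition is_ideal (I : R -> Prop) : Prop :=
  [/\ I 0, (forall x y, I x -> I y -> I (x + y)) & forall a x, I x -> I (a * x)].

(* J = (xs) is a GV-ideal: R -> Hom_R(J,R), r |-> (x |-> r x) is bijective.
   Elements of Hom_R(J,R) are represented by functions R -> R that are
   R-linear on J, compared on J. *)
Definition GV (xs : seq R) : Prop :=
  let J := ideal_gen xs in
  (forall r : R, (forall x, J x -> r * x = 0) -> r = 0) /\
  (forall f : R -> R,
     (forall a x y, J x -> J y -> f (a * x + y) = a * f x + f y) ->
     exists r : R, forall x, J x -> f x = r * x).

Definition gv_tor_elt (M : lmodType R) (x : M) : Prop :=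
  exists xs, GV xs /\ forall j, ideal_gen xs j -> j *: x = 0.

Definition GV_torsion_free (M : lmodType R) : Prop :=
  forall x : M, gv_tor_elt x -> x = 0.

(* Q is (isomorphic to) R/J : cyclic with annihilator of a generator = J *)
Definition quotient_by (J : R -> Prop) (Q : lmodType R) : Prop :=
  exists q0 : Q, (forall y : Q, exists r, y = r *: q0) /\
                 (forall r, r *: q0 = 0 <-> J r).

Definition w_module (M : lmodType R) : Prop :=
  GV_torsion_free M /\
  forall xs, GV xs -> forall Q : lmodType R, quotient_by (ideal_gen xs) Q ->
    Ext1_zero Q M.

(* an ideal I is a w-ideal: I (i.e. any R-module isomorphic to I via an
   injective linear map onto I) is a w-module *)
Definition w_ideal (I : R -> Prop) : Prop :=
  forall (N : lmodType R) (e : N -> R^o), lin e -> injective e ->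
    (forall r : R, I r <-> exists x, e x = r) -> w_module N.

Definition DW_ring : Prop := forall I, is_ideal I -> w_ideal I.

Definition fin_presented (N : lmodType R) : Prop :=
  exists n (g : 'I_n -> N),
    (forall y, exists c : 'I_n -> R, y = \sum_(i < n) c i *: g i) /\
    exists k (rel : 'I_k -> 'I_n -> R),
      (forall l, \sum_(i < n) rel l i *: g i = 0) /\
      forall c : 'I_n -> R, \sum_(i < n) c i *: g i = 0 ->
        exists d : 'I_k -> R, forall i, c i = \sum_(l < k) d l * rel l i.

(* Ext^1_R(N, A) is GV-torsion: each class [0->A-i->E-p->N->0] is killed by
   some GV-ideal J; j.[xi] (pushout along j.id_A) is zero iff j.id_A extends
   along i to E. *)
Definition Ext1_GV_torsion (N A : lmodType R) : Prop :=
  forall (E : lmodType R) (i : A -> E) (p : E -> N), ses i p ->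
    exists xs, GV xs /\ forall j, ideal_gen xs j ->
      exists h : E -> A, lin h /\ forall a, h (i a) = j *: a.

Definition abs_w_pure (A : lmodType R) : Prop :=
  forall N : lmodType R, fin_presented N -> Ext1_GV_torsion N A.

Definition abs_pure (A : lmodType R) : Prop :=
  forall N : lmodType R, fin_presented N -> Ext1_zero N A.

Definition w_FP_projective (M : lmodType R) : Prop :=
  forall A : lmodType R, abs_w_pure A -> Ext1_zero M A.

Definition FP_projective (M : lmodType R) : Prop :=
  forall A : lmodType R, abs_pure A -> Ext1_zero M A.

End GVTheory.

(* Main.v *)
Require Import Defs.
From mathcomp Require Import all_boot all_algebra.
From HB Require Import structures.
From mathcomp Require Import boolp.
Set Implicit Arguments. Unset Strict Implicit. Unset Printing Implicit Defensive.
Import GRing.Theory.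
Local Open Scope ring_scope.

Section Gen.
Variable R : comPzRingType.
Variable M : lmodType R.

Record subm := Subm {
  smP :> M -> Prop;
  sm0 : smP 0;
  smB : forall x y, smP x -> smP y -> smP (x - y);
  smZ : forall a x, smP x -> smP (a *: x) }.

Lemma smN (S : subm) x : S x -> S (- x).
Proof. by move=> Sx; rewrite -sub0r; apply: smB => //; apply: sm0. Qed.
Lemma smD (S : subm) x y : S x -> S y -> S (x + y).
Proof. by move=> Sx Sy; rewrite -[y]opprK; apply: smB => //; apply: smN. Qed.

Definition qT (S : subm) := {P : M -> Prop | exists x, P = fun y => S (y - x)}.
HB.instance Definition _ S := gen_eqMixin (qT S).
HB.instance Definition _ S := gen_choiceMixin (qT S).

Definition qpi (S : subm) (x : M) : qT S :=
  exist _ (fun y => S (y - x)) (ex_intro _ x erefl).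

Lemma qind (S : subm) (q : qT S) : exists x, q = qpi S x.
Proof.
case: q => P [x Px]; exists x; rewrite /qpi; exact: eq_exist.
Qed.

Definition qrep (S : subm) (q : qT S) : M := proj1_sig (cid (qind q)).
Lemma qrepK (S : subm) (q : qT S) : qpi S (qrep q) = q.
Proof. by rewrite /qrep; case: cid => x /= ->. Qed.

Lemma qpiP (S : subm) x y : qpi S x = qpi S y <-> S (x - y).
Proof.
split.
  move=> /(congr1 (@proj1_sig _ _)) /= /(congr1 (fun P => P x)).
  by rewrite subrr => <-; apply: sm0.
move=> Sxy; apply: eq_exist; apply: funext => z; apply: propext; split => H.
  by have := smD H Sxy; rewrite addrA subrK.
by have := smB H Sxy; rewrite opprB addrA subrK.
Qed.

Lemma qrepP (S : subm) x : S (qrep (qpi S x) - x).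
Proof. by apply/qpiP; rewrite qrepK. Qed.

Section QOps.
Variable S : subm.
Definition qadd (p q : qT S) := qpi S (qrep p + qrep q).
Definition qopp (q : qT S) := qpi S (- qrep q).
Definition qzero := qpi S 0.
Definition qscale (a : R) (q : qT S) := qpi S (a *: qrep q).

Lemma qaddE x y : qadd (qpi S x) (qpi S y) = qpi S (x + y).
Proof.
apply/qpiP; have := smD (qrepP S x) (qrepP S y).
by rewrite opprD addrACA.
Qed.
Lemma qoppE x : qopp (qpi S x) = qpi S (- x).
Proof. by apply/qpiP; have := smN (qrepP S x); rewrite opprB opprK addrC. Qed.
Lemma qscaleE a x : qscale a (qpi S x) = qpi S (a *: x).
Proof. by apply/qpiP; have := smZ a (qrepP S x); rewrite scalerBr. Qed.

Lemma qaddA : associative qadd.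
Proof.
move=> p q r; case: (qind p) => x ->; case: (qind q) => y ->; case: (qind r) => z ->.
by rewrite !qaddE addrA.
Qed.
Lemma qaddC : commutative qadd.
Proof. by move=> p q; case: (qind p) => x ->; case: (qind q) => y ->; rewrite !qaddE addrC. Qed.
Lemma qadd0 : left_id qzero qadd.
Proof. by move=> p; case: (qind p) => x ->; rewrite /qzero qaddE add0r. Qed.
Lemma qaddN : left_inverse qzero qopp qadd.
Proof. by move=> p; case: (qind p) => x ->; rewrite qoppE qaddE addNr. Qed.

HB.instance Definition _ := GRing.isZmodule.Build (qT S) qaddA qaddC qadd0 qaddN.
Lemma qpiD x y : qpi S (x + y) = qpi S x + qpi S y.
Proof. exact: (esym (qaddE x y)). Qed.

Lemma qscaleA a b v : qscale a (qscale b v) = qscale (a * b) v.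
Proof. by case: (qind v) => x ->; rewrite !qscaleE scalerA. Qed.
Lemma qscale1 : left_id 1 qscale.
Proof. by move=> v; case: (qind v) => x ->; rewrite !qscaleE scale1r. Qed.
Lemma qscaleDr : right_distributive qscale +%R.
Proof.
move=> a u v; case: (qind u) => x ->; case: (qind v) => y ->.
by rewrite -(qpiD x y) !qscaleE -qpiD scalerDr.
Qed.
Lemma qscaleDl v : {morph qscale^~ v: a b / a + b}.
Proof. by move=> a b; case: (qind v) => x ->; rewrite !qscaleE -qpiD scalerDl. Qed.

HB.instance Definition _ := GRing.Zmodule_isLmodule.Build R (qT S) qscaleA qscale1 qscaleDr qscaleDl.

Lemma qpiZ a x : qpi S (a *: x) = a *: qpi S x.
Proof. by rewrite /GRing.scale /= qscaleE. Qed.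
Lemma qpiN x : qpi S (- x) = - qpi S x.
Proof. exact: (esym (qoppE x)). Qed.
Lemma qpiB x y : qpi S (x - y) = qpi S x - qpi S y.
Proof. by rewrite qpiD qpiN. Qed.
Lemma qpi0 : qpi S 0 = 0.
Proof. by []. Qed.
Lemma qpi_eq0 x : qpi S x = 0 <-> S x.
Proof. by rewrite -qpi0 qpiP subr0. Qed.
End QOps.

Definition sT (S : subm) := {x : M | S x}.
HB.instance Definition _ S := gen_eqMixin (sT S).
HB.instance Definition _ S := gen_choiceMixin (sT S).

Section SOps.
Variable S : subm.
Lemma sval_inj (a b : sT S) : proj1_sig a = proj1_sig b -> a = b.
Proof. by case: a => x px; case: b => y py /= xy; apply: eq_exist. Qed.
Definition sadd (a b : sT S) : sT S := exist _ _ (smD (proj2_sig a) (proj2_sig b)).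
Definition sopp (a : sT S) : sT S := exist _ _ (smN (proj2_sig a)).
Definition szero : sT S := exist _ _ (sm0 S).
Definition sscale r (a : sT S) : sT S := exist _ _ (smZ r (proj2_sig a)).
Lemma saddA : associative sadd.
Proof. by move=> a b c; apply: sval_inj; rewrite /= addrA. Qed.
Lemma saddC : commutative sadd.
Proof. by move=> a b; apply: sval_inj; rewrite /= addrC. Qed.
Lemma sadd0 : left_id szero sadd.
Proof. by move=> a; apply: sval_inj; rewrite /= add0r. Qed.
Lemma saddN : left_inverse szero sopp sadd.
Proof. by move=> a; apply: sval_inj; rewrite /= addNr. Qed.
HB.instance Definition _ := GRing.isZmodule.Build (sT S) saddA saddC sadd0 saddN.
Lemma sscaleA a b v : sscale a (sscale b v) = sscale (a * b) v.
Proof. by apply: sval_inj; rewrite /= scalerA. Qed.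
Lemma sscale1 : left_id 1 sscale.
Proof. by move=> v; apply: sval_inj; rewrite /= scale1r. Qed.
Lemma sscaleDr : right_distributive sscale +%R.
Proof. by move=> a u v; apply: sval_inj; rewrite /= scalerDr. Qed.
Lemma sscaleDl v : {morph sscale^~ v: a b / a + b}.
Proof. by move=> a b; apply: sval_inj; rewrite /= scalerDl. Qed.
HB.instance Definition _ := GRing.Zmodule_isLmodule.Build R (sT S) sscaleA sscale1 sscaleDr sscaleDl.

Lemma svalD (a b : sT S) : proj1_sig (a + b) = proj1_sig a + proj1_sig b.
Proof. by []. Qed.
Lemma svalZ r (a : sT S) : proj1_sig (r *: a) = r *: proj1_sig a.
Proof. by []. Qed.
Lemma sval0 : proj1_sig (0 : sT S) = 0.
Proof. by []. Qed.
End SOps.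
End Gen.
Section Main.
Variable R : comPzRingType.
Implicit Types (xs zs : seq R) (P : R -> Prop).

Fixpoint lgen (P : R -> Prop) xs (r : R) : Prop :=
  match xs with
  | [::] => r = 0
  | x :: ys => exists a r', [/\ P a, lgen P ys r' & r = a * x + r']
  end.

Lemma idealB P x y : is_ideal P -> P x -> P y -> P (x - y).
Proof.
case=> P0 PD PM Px Py; apply: PD => //.
by rewrite -mulN1r; apply: PM.
Qed.

Lemma lgen_0 P xs : is_ideal P -> lgen P xs 0.
Proof.
case=> P0 _ _; elim: xs => [//|x ys IH] /=.
by exists 0, 0; split => //; rewrite mul0r addr0.
Qed.

Lemma lgen_D P xs r s : is_ideal P -> lgen P xs r -> lgen P xs s -> lgen P xs (r + s).
Proof.
move=> HP; case: (HP) => P0 PD PM.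
elim: xs r s => [|x ys IH] r s /=; first by move=> -> ->; rewrite addr0.
move=> [a [r' [Pa Hr ->]]] [b [s' [Pb Hs ->]]].
exists (a + b), (r' + s'); split; [exact: PD | exact: IH |].
by rewrite mulrDl addrACA.
Qed.

Lemma lgen_M P xs b r : is_ideal P -> lgen P xs r -> lgen P xs (b * r).
Proof.
move=> HP; case: (HP) => P0 PD PM.
elim: xs r => [|x ys IH] r /=; first by move=> ->; rewrite mulr0.
move=> [a [r' [Pa Hr ->]]].
exists (b * a), (b * r'); split; [exact: PM | exact: IH |].
by rewrite mulrDr mulrA.
Qed.

Lemma lgen_B P xs r s : is_ideal P -> lgen P xs r -> lgen P xs s -> lgen P xs (r - s).
Proof.
move=> HP Hr Hs; apply: lgen_D => //.
by rewrite -mulN1r; apply: lgen_M.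
Qed.

Lemma lgen_mem P xs a x : is_ideal P -> P a -> x \in xs -> lgen P xs (a * x).
Proof.
move=> HP; case: (HP) => P0 PD PM Pa.
elim: xs => [//|y ys IH] /=; rewrite in_cons => /orP [/eqP ->|xin].
  by exists a, 0; split => //; [exact: lgen_0 | rewrite addr0].
exists 0, (a * x); split => //; first exact: IH.
by rewrite mul0r add0r.
Qed.

Lemma lgen_kill P xs w r : (forall z, z \in xs -> w * z = 0) -> lgen P xs r -> w * r = 0.
Proof.
elim: xs r => [|x ys IH] r /= Hw; first by move=> ->; rewrite mulr0.
move=> [a [r' [_ Hr ->]]].
rewrite mulrDr mulrCA (Hw x) ?mem_head // mulr0 add0r.
by apply: IH => // z zin; apply: Hw; rewrite in_cons zin orbT.
Qed.

Lemma lgen_mono (P Q : R -> Prop) xs r : (forall a, P a -> Q a) -> lgen P xs r -> lgen Q xs r.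
Proof.
move=> PQ; elim: xs r => [//|x ys IH] r /= [a [r' [Pa Hr ->]]].
by exists a, r'; split => //; [exact: PQ | exact: IH].
Qed.

Lemma ideal_genE xs r : ideal_gen xs r <-> lgen (fun _ => True) xs r.
Proof.
elim: xs r => [|x ys IH] r.
  split; first by case=> cs [_ ->]; rewrite big_ord0.
  by move=> /= ->; exists [::]; rewrite big_ord0.
split.
  case=> cs [Hs ->]; case: cs Hs => [//|c cs] /= [Hs].
  exists c, (\sum_(i < size ys) cs`_i * ys`_i); split => //.
    by apply/IH; exists cs.
  by rewrite big_ord_recl.
move=> /= [a [r' [_ /IH [cs [Hs ->]] ->]]].
by exists (a :: cs); split; [rewrite /= Hs | rewrite big_ord_recl].
Qed.

Lemma ideal_True : is_ideal (fun _ : R => True).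
Proof. by []. Qed.

Lemma ideal_gen_ideal xs : is_ideal (ideal_gen xs).
Proof.
split.
- by apply/ideal_genE; apply: lgen_0.
- by move=> x y /ideal_genE Hx /ideal_genE Hy; apply/ideal_genE; apply: lgen_D.
- by move=> a x /ideal_genE Hx; apply/ideal_genE; apply: lgen_M.
Qed.

Lemma gen_mem xs x : x \in xs -> ideal_gen xs x.
Proof. by move=> xin; apply/ideal_genE; rewrite -[x]mul1r; apply: lgen_mem. Qed.

Lemma lgen_mulP P xs x y : is_ideal P -> P x -> lgen (fun _ => True) xs y -> lgen P xs (x * y).
Proof.
move=> HP; case: (HP) => P0 PD PM Px.
elim: xs y => [|z ys IH] y /=; first by move=> ->; rewrite mulr0.
move=> [a [r' [_ Hr ->]]].
exists (x * a), (x * r'); split; [by rewrite mulrC; apply: PM | exact: IH |].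
by rewrite mulrDr mulrA.
Qed.

Lemma nakayama (J : R -> Prop) zs v : is_ideal J -> J (1 - v) ->
  (forall z, z \in zs -> lgen J zs (v * z)) ->
  exists w, J (1 - w) /\ forall z, z \in zs -> w * z = 0.
Proof.
move=> HJ; case: (HJ) => J0 JD JM.
elim: zs v => [|y zs IH] v Jv Hz; first by exists v; split.
have := Hz y (mem_head _ _) => /= [[c [r0 [Jc Hr0 Evy]]]].
pose v' := v - c.
have Jv' : J (1 - v') by rewrite /v' opprB addrCA; apply: JD.
have v'y : v' * y = r0 by rewrite /v' mulrBl Evy addrAC subrr add0r.
clearbody v'.
have Jvv : J (1 - v' * v).
  have -> : 1 - v' * v = (1 - v') + v' * (1 - v) by rewrite mulrBr mulr1 addrA subrK.
  by apply: JD => //; apply: JM.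
have Hz' : forall z, z \in zs -> lgen J zs ((v' * v) * z).
  move=> z zin; have := Hz z; rewrite in_cons zin orbT => /(_ isT) /= [d [rz [Jd Hrz Evz]]].
  rewrite -mulrA Evz mulrDr mulrCA v'y.
  by apply: lgen_D => //; apply: lgen_M.
have [w' [Jw' Kw']] := IH _ Jvv Hz'.
exists (w' * v'); split.
  have -> : 1 - w' * v' = (1 - w') + w' * (1 - v') by rewrite mulrBr mulr1 addrA subrK.
  by apply: JD => //; apply: JM.
move=> z; rewrite in_cons => /orP [/eqP ->|zin].
  by rewrite -mulrA v'y; apply: (lgen_kill Kw' Hr0).
by rewrite mulrC mulrA [z * _]mulrC Kw' // mul0r.
Qed.

End Main.
Section Main2.
Variable R : comPzRingType.
Implicit Types (xs zs : seq R) (P : R -> Prop).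

Section Lin.
Variables (M N : lmodType R) (f : M -> N).
Hypothesis hf : lin f.
Lemma linD x y : f (x + y) = f x + f y.
Proof. by have := hf 1 x y; rewrite !scale1r. Qed.
Lemma lin0 : f 0 = 0.
Proof. by apply: (@addrI _ (f 0)); rewrite -linD !addr0. Qed.
Lemma linZ a x : f (a *: x) = a *: f x.
Proof. by rewrite -[a *: x]addr0 hf lin0 addr0. Qed.
Lemma linN x : f (- x) = - f x.
Proof. by rewrite -scaleN1r linZ scaleN1r. Qed.
Lemma linB x y : f (x - y) = f x - f y.
Proof. by rewrite linD linN. Qed.
End Lin.

Lemma scaleRoE (a x : R^o) : a *: x = a * x.
Proof. by []. Qed.

Definition mkS P (HP : is_ideal P) : subm R^o.
Proof.
refine (@Subm R R^o P _ _ _).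
- by case: HP.
- by move=> x y Px Py; apply: idealB.
- by case: HP => _ _ PM a x Px; rewrite scaleRoE; apply: PM.
Defined.

Lemma GVkill xs w : GV xs -> (forall z, z \in xs -> w * z = 0) -> w = 0.
Proof.
move=> [G1 _] Hw; apply: G1 => x /ideal_genE Hx.
exact: (lgen_kill Hw Hx).
Qed.

Definition GVone := forall xs, GV xs -> ideal_gen xs 1.

Lemma key1 : (forall N : lmodType R, fin_presented N -> w_FP_projective N) -> GVone.
Proof.
move=> H1 xs GVxs.
pose J := ideal_gen xs.
have HJ : is_ideal J by apply: ideal_gen_ideal.
pose SJ := mkS HJ.
pose J2 := lgen J xs.
have HJ2 : is_ideal J2.
  split; [exact: lgen_0 | move=> x y; exact: lgen_D | move=> a x; exact: lgen_M].
have J2J : forall r, J2 r -> J r.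
  by move=> r Hr; apply/ideal_genE; apply: lgen_mono Hr.
pose SJ2 := mkS HJ2.
pose Q : lmodType R := qT SJ.
pose E : lmodType R := qT SJ2.
pose Aset : E -> Prop := fun e => exists x, J x /\ e = qpi SJ2 x.
have SA0 : Aset 0 by exists 0; split; [case: (HJ)|].
have SAB : forall x y, Aset x -> Aset y -> Aset (x - y).
  move=> _ _ [x [Jx ->]] [y [Jy ->]]; exists (x - y); split; first exact: idealB.
  by rewrite qpiB.
have SAZ : forall a x, Aset x -> Aset (a *: x).
  move=> a _ [x [Jx ->]]; exists (a * x); split; first by case: (HJ) => _ _; apply.
  by rewrite qpiZ.
pose SA := @Subm R E Aset SA0 SAB SAZ.
pose A : lmodType R := sT SA.
pose p : E -> Q := fun e => qpi SJ (qrep e).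
have pE : forall r, p (qpi SJ2 r) = qpi SJ r.
  by move=> r; apply/qpiP; apply: J2J; apply: (qrepP SJ2 r).
have linp : lin p.
  move=> a e e'; case: (qind e) => x ->; case: (qind e') => y ->.
  by rewrite -qpiZ -qpiD !pE qpiD qpiZ.
pose i : A -> E := fun a => proj1_sig a.
have sesip : ses i p.
  split.
  - by move=> a x y.
  - exact: linp.
  - by move=> x y; apply: sval_inj.
  - by move=> y; case: (qind y) => r ->; exists (qpi SJ2 r); rewrite pE.
  - move=> x; case: (qind x) => r ->; rewrite pE; split.
      move=> /qpi_eq0 /= Jr.
      by exists (exist _ (qpi SJ2 r) (ex_intro _ r (conj Jr erefl))).
    case=> [[e [y [Jy Ee]]]] /= Eer; rewrite Ee in Eer; move: Eer => /qpiP /= Hyr; apply/qpi_eq0 => /=.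
    have -> : r = y - (y - r) by rewrite opprB addrC subrK.
    by apply: idealB => //; apply: J2J.
have fpQ : fin_presented Q.
  exists 1%N, (fun _ => qpi SJ 1); split.
    move=> y; case: (qind y) => r ->; exists (fun _ => r).
    by rewrite big_ord1 -qpiZ scaleRoE mulr1.
  exists (size xs), (fun l _ => xs`_l); split.
    move=> l; rewrite big_ord1 -qpiZ scaleRoE mulr1; apply/qpi_eq0 => /=.
    by apply: gen_mem; apply: mem_nth.
  move=> c; rewrite big_ord1 -qpiZ scaleRoE mulr1 => /qpi_eq0 /= [cs [Hs Hc]].
  by exists (fun l => cs`_l) => k; rewrite (ord1 k) Hc.
have absA : abs_w_pure A.
  move=> N _ E' i' p' _; exists xs; split => // j Jj.
  exists (fun _ => 0); split; first by move=> a x y; rewrite scaler0 addr0.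
  move=> [e [x [Jx Ee]]]; apply: sval_inj; rewrite svalZ /= Ee -qpiZ.
  apply/esym/qpi_eq0 => /=; rewrite scaleRoE.
  by apply: lgen_mulP => //; apply/ideal_genE.
have [s [lins ps]] := H1 Q fpQ A absA E i p sesip.
case: (qind (s (qpi SJ 1))) => r tr.
have Jr1 : J (r - 1).
  by have := ps (qpi SJ 1); rewrite tr pE => /qpiP.
have J2x : forall x, x \in xs -> lgen J xs (1 * x).
  move=> x xin; rewrite mul1r.
  have Jx : J x by apply: gen_mem.
  have := linZ lins x (qpi SJ 1).
  rewrite -qpiZ scaleRoE mulr1 (proj2 (qpi_eq0 SJ x) Jx) (lin0 lins) tr -qpiZ.
  move=> /esym /qpi_eq0 /= Hxr.
  have -> : x = x *: r - x * (r - 1) by rewrite scaleRoE mulrBr mulr1 opprB addrC subrK.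
  apply: lgen_B => //; apply: lgen_mulP => //; exact/ideal_genE.
have J11 : J (1 - 1) by rewrite subrr; case: (HJ).
have [w [Jw Kw]] := nakayama HJ J11 J2x.
by have := GVkill GVxs Kw => w0; rewrite w0 subr0 in Jw.
Qed.


Lemma key2 : DW_ring R -> GVone.
Proof.
move=> DW xs GVxs.
pose J := ideal_gen xs.
have HJ : is_ideal J by apply: ideal_gen_ideal.
pose SJ := mkS HJ.
pose N : lmodType R := sT SJ.
pose e : N -> R^o := fun a => proj1_sig a.
have line : lin e by [].
have inje : injective e by move=> a b; apply: sval_inj.
have imge : forall r : R, J r <-> exists x, e x = r.
  move=> r; split; first by move=> Jr; exists (exist _ r Jr).
  by case=> [[y Jy]] /= <-.
have [_ HW] := DW J HJ N e line inje imge.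
pose Q : lmodType R := qT SJ.
have quotQ : quotient_by J Q.
  exists (qpi SJ 1); split.
    by move=> y; case: (qind y) => r ->; exists r; rewrite -qpiZ scaleRoE mulr1.
  by move=> r; rewrite -qpiZ scaleRoE mulr1; apply: qpi_eq0.
have sesJ : ses e (qpi SJ).
  split.
  - exact: line.
  - by move=> a x y; rewrite qpiD qpiZ.
  - exact: inje.
  - by move=> y; case: (qind y) => r ->; exists r.
  - move=> x; split; first by move=> /qpi_eq0 /= Jx; apply/imge.
    by move=> /imge Jx; apply/qpi_eq0.
have [s [lins ps]] := HW xs GVxs Q quotQ _ e (qpi SJ) sesJ.
have t0 : s (qpi SJ 1) = 0.
  case: GVxs => G1 _; apply: G1 => x Jx.
  have := linZ lins x (qpi SJ 1).
  rewrite -qpiZ scaleRoE mulr1 (proj2 (qpi_eq0 SJ x) Jx) (lin0 lins) scaleRoE.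
  by move=> /esym; rewrite mulrC.
by have := ps (qpi SJ 1); rewrite t0 qpi0 => /esym /qpi_eq0.
Qed.

Lemma key3 : GVone -> DW_ring R.
Proof.
move=> G1 I HI N e _ _ _; split.
  move=> x [xs [GVxs Hx]]; rewrite -[x]scale1r; apply: Hx; exact: G1.
move=> xs GVxs Q [q0 [Hq0 Hann]] E i p [_ linp _ _ _].
have q00 : q0 = 0 by rewrite -[q0]scale1r; apply/Hann; apply: G1.
exists (fun _ => 0); split; first by move=> a x y; rewrite scaler0 addr0.
move=> y; have [r ->] := Hq0 y; rewrite q00 scaler0; exact: lin0 linp.
Qed.

Lemma key4 (A : lmodType R) : GVone -> abs_w_pure A -> abs_pure A.
Proof.
move=> G1 HA N fpN E i p [lini linp inji surjp kerp].
have [xs [GVxs Hj]] := HA N fpN E i p (And5 lini linp inji surjp kerp).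
have [h [linh hi]] := Hj 1 (G1 xs GVxs).
have pi0 : forall a, p (i a) = 0 by move=> a; apply/kerp; exists a.
have uniq : forall x x', p x = p x' -> h x = h x' -> x = x'.
  move=> x x' pxx hxx.
  have : p (x - x') = 0 by rewrite (linB linp) pxx subrr.
  move=> /kerp [b ib].
  have : h (x - x') = 0 by rewrite (linB linh) hxx subrr.
  rewrite -ib hi scale1r => b0; move: ib; rewrite b0 (lin0 lini) => /esym /eqP.
  by rewrite subr_eq0 => /eqP.
pose pre y := proj1_sig (cid (surjp y)).
have preP : forall y, p (pre y) = y by move=> y; rewrite /pre; case: cid.
pose s y := pre y - i (h (pre y)).
have ps : forall y, p (s y) = y by move=> y; rewrite (linB linp) pi0 subr0 preP.
have hs : forall y, h (s y) = 0 by move=> y; rewrite (linB linh) hi scale1r subrr.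
exists s; split => // a y y'; apply: uniq.
  by rewrite ps linp !ps.
by rewrite hs linh !hs scaler0 addr0.
Qed.

Lemma fp_FPproj (N : lmodType R) : fin_presented N -> FP_projective N.
Proof. by move=> fpN A HA; apply: HA. Qed.

End Main2.

Theorem proposition2p4 (R : comPzRingType) :
  ((forall N : lmodType R, fin_presented N -> w_FP_projective N) <-> DW_ring R) /\
  ((forall M : lmodType R, FP_projective M -> w_FP_projective M) <-> DW_ring R).
Proof.
split; split.
- by move=> H; apply: key3; apply: key1.
- move=> DW N fpN A HA; apply: (key4 (key2 DW) HA); exact: fpN.
- by move=> H; apply: key3; apply: key1 => N fpN; apply: H; apply: fp_FPproj.
- by move=> DW M HM A HA; apply: HM; apply: (key4 (key2 DW) HA).
Qed.
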